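(* Let $\varepsilon>0$. Let $(G,\sigma)$ be a finite connected signed graph satisfying $CD^{\sigma}(K,N)$ with $K\in\mathbb{R}$ and $N\in(0,\infty]$ such that $N>\frac{4}{(2+\varepsilon)^2}$, and let $\lambda^{\sigma}$ be a nonzero eigenvalue of $\Delta^\sigma$. Then \[ \lambda^{\sigma}\geq\frac{\varepsilon}{(2+\varepsilon)^{2}-\frac{4}{N}}\cdot\frac{1}{d(D+1)\lceil (D+1)/2\rceil}+\frac{2(2+\varepsilon)}{(2+\varepsilon)^{2}-\frac{4}{N}}K, \] where $d$ is the maximal vertex degree and $D$ the diameter of $G$. Moreover, if the multiplicity of $\lambda^\sigma$ is at least $2$ or $(G,\sigma)$ is balanced, then \[ \lambda^{\sigma}\geq\frac{\varepsilon}{(2+\varepsilon)^{2}-\frac{4}{N}}\cdot\frac{1}{dD\lceil D/2\rceil}+\frac{2(2+\varepsilon)}{(2+\varepsilon)^{2}-\frac{4}{N}}K. \] (Convention $\frac1N=0$ if $N=\infty$.)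
   Context: $G=(V,E)$ is a finite simple connected graph with degrees $d_x$; $\sigma:E\to\{\pm1\}$, $\sigma_{xy}=\sigma(\{x,y\})$. $(G,\sigma)$ is balanced if the product of signs along every cycle is $+1$. Signed Laplacian $\Delta^{\sigma}f(x)=\frac{1}{d_x}\sum_{y\sim x}(\sigma_{xy}f(y)-f(x))$; $\Delta$ is the case $\sigma\equiv+1$; $\lambda$ is an eigenvalue of $\Delta^\sigma$ if $-\Delta^\sigma f=\lambda f$ for some nonzero $f$. $\Gamma^{\sigma}(f,g)=\frac12\{\Delta(fg)-g\Delta^{\sigma}f-f\Delta^{\sigma}g\}$, $\Gamma_2^{\sigma}(f,g)=\frac12\{\Delta\Gamma^{\sigma}(f,g)-\Gamma^{\sigma}(g,\Delta^{\sigma}f)-\Gamma^{\sigma}(f,\Delta^{\sigma}g)\}$. $CD^{\sigma}(K,N)$ means $\Gamma_2^{\sigma}(f,f)(x)\ge\frac1N(\Delta^\sigma f)^2(x)+K\Gamma^\sigma(f,f)(x)$ for all $f:V\to\mathbb{R}$ and all $x\in V$. $\lceil\cdot\rceil$ is the ceiling function. *)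

(* Defs.v *)
From HB Require Import structures.
From mathcomp Require Import all_boot all_order all_algebra.
From mathcomp Require Import reals.
Set Implicit Arguments. Unset Strict Implicit. Unset Printing Implicit Defensive.
Import Order.TTheory GRing.Theory Num.Theory.
Local Open Scope ring_scope.

Section SignedGraph.
Variables (R : realType) (T : finType) (adj : rel T).

Definition simple_graph := symmetric adj /\ irreflexive adj.
Definition connected_graph := forall x y : T, connect adj x y.

Definition signing (sgn : T -> T -> R) :=
  forall x y, adj x y -> sgn x y = sgn y x /\ (sgn x y = 1 \/ sgn x y = -1).

Definition deg (x : T) : nat := #|[set y | adj x y]|.
Definition maxdeg : nat := \max_(x : T) deg x.

Definition reach_in (x y : T) (n : nat) : bool :=
  [exists p : n.-tuple T, path adj x p && (last x p == y)].
Definition dist (x y : T) : nat := find (reach_in x y) (iota 0 #|T|).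
Definition diam : nat := \max_(x : T) \max_(y : T) dist x y.

Definition lap (sgn : T -> T -> R) (f : T -> R) (x : T) : R :=
  (deg x)%:R^-1 * \sum_(y | adj x y) (sgn x y * f y - f x).
Definition lap0 (f : T -> R) : T -> R := lap (fun _ _ => 1) f.

Definition Gam (sgn : T -> T -> R) (f g : T -> R) (x : T) : R :=
  2^-1 * (lap0 (fun z => f z * g z) x - g x * lap sgn f x - f x * lap sgn g x).

Definition Gam2 (sgn : T -> T -> R) (f g : T -> R) (x : T) : R :=
  2^-1 * (lap0 (Gam sgn f g) x - Gam sgn g (lap sgn f) x
          - Gam sgn f (lap sgn g) x).

(* 1/N with the convention 1/oo = 0; None encodes N = oo *)
Definition invN (N : option R) : R := if N is Some n then n^-1 else 0.

Definition CD (sgn : T -> T -> R) (K : R) (N : option R) :=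
  forall (f : T -> R) (x : T),
    Gam2 sgn f f x >= invN N * (lap sgn f x) ^+ 2 + K * Gam sgn f f x.

Definition eigenfun (sgn : T -> T -> R) (lam : R) (f : T -> R) :=
  forall x, - lap sgn f x = lam * f x.
Definition signed_eigenvalue (sgn : T -> T -> R) (lam : R) :=
  exists f : T -> R, eigenfun sgn lam f /\ exists x, f x != 0.
Definition mult_ge2 (sgn : T -> T -> R) (lam : R) :=
  exists f g : T -> R, eigenfun sgn lam f /\ eigenfun sgn lam g /\
    forall a b : R, (forall x, a * f x + b * g x = 0) -> a = 0 /\ b = 0.

Definition balanced (sgn : T -> T -> R) :=
  forall p : seq T, ucycle adj p -> (3 <= size p)%N ->
    \prod_(x <- p) sgn x (next p x) = 1.

Definition bound (eps K : R) (N : option R) (a b : nat) : R :=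
  eps / ((2 + eps) ^+ 2 - 4 * invN N) * ((maxdeg * a * b)%N%:R)^-1
  + 2 * (2 + eps) / ((2 + eps) ^+ 2 - 4 * invN N) * K.

End SignedGraph.

(* Main.v *)
Require Import Defs.
From HB Require Import structures.
From mathcomp Require Import all_boot all_order all_algebra.
From mathcomp Require Import reals.
From mathcomp Require Import ring lra zify.
From Stdlib Require Import Classical FunctionalExtensionality.
Set Implicit Arguments. Unset Strict Implicit. Unset Printing Implicit Defensive.
Import Order.TTheory GRing.Theory Num.Theory.
Local Open Scope ring_scope.

Section Aux.
Variables (R : realType) (T : finType) (adj : rel T) (sgn : T -> T -> R).
Hypothesis (Hsym : symmetric adj) (Hirr : irreflexive adj) (Hsg : signing adj sgn).

Lemma sgn2 x y : adj x y -> sgn x y ^+ 2 = 1.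
Proof. by move=> /Hsg [_ [->|->]]; rewrite ?sqrrN expr1n. Qed.

Lemma sgn_sym x y : adj x y -> sgn x y = sgn y x.
Proof. by move=> /Hsg []. Qed.

Lemma lap_ext (s : T -> T -> R) f1 f2 x : (forall z, f1 z = f2 z) -> lap adj s f1 x = lap adj s f2 x.
Proof. by move=> E; rewrite /lap; congr (_ * _); apply: eq_bigr => y _; rewrite !E. Qed.

Lemma lapZ (s : T -> T -> R) c f x : lap adj s (fun z => c * f z) x = c * lap adj s f x.
Proof.
rewrite /lap mulrCA; congr (_ * _); rewrite mulr_sumr; apply: eq_bigr => y _; ring.
Qed.

Lemma lapD (s : T -> T -> R) f1 f2 x :
  lap adj s (fun z => f1 z + f2 z) x = lap adj s f1 x + lap adj s f2 x.
Proof.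
rewrite /lap -mulrDr; congr (_ * _); rewrite -big_split; apply: eq_bigr => y _ /=; ring.
Qed.

Lemma GamE g y : Gam adj sgn g g y =
  2^-1 * (deg adj y)%:R^-1 * \sum_(z | adj y z) (sgn y z * g z - g y) ^+ 2.
Proof.
rewrite /Gam /lap0 /lap.
have -> : \sum_(z | adj y z) (sgn y z * g z - g y) ^+ 2 =
  \sum_(z | adj y z) ((1 * (g z * g z) - g y * g y) - g y * (sgn y z * g z - g y)
     - g y * (sgn y z * g z - g y)).
  apply: eq_bigr => z /sgn2 h2.
  have -> : (sgn y z * g z - g y) ^+ 2 = sgn y z ^+ 2 * g z ^+2 - 2 * sgn y z * g z * g y + g y ^+ 2 by ring.
  rewrite h2; ring.
rewrite !sumrB -!mulr_sumr !sumrB; ring.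
Qed.

Lemma Gam_ge0 g y : 0 <= Gam adj sgn g g y.
Proof.
rewrite GamE; apply: mulr_ge0; first by apply: mulr_ge0; rewrite ?invr_ge0 ?ler0n.
by apply: sumr_ge0 => z _; apply: sqr_ge0.
Qed.


Lemma lap_eig lam g : eigenfun adj sgn lam g -> lap adj sgn g = (fun z => - lam * g z).
Proof. by move=> E; apply: functional_extensionality => z; rewrite mulNr -E opprK. Qed.

Lemma Gam_lin2 f c x : Gam adj sgn f (fun z => c * f z) x = c * Gam adj sgn f f x.
Proof.
rewrite /Gam /lap0 (lap_ext _ (f2 := fun z => c * (f z * f z))); last by move=> z; ring.
by rewrite lapZ lapZ; ring.
Qed.

Lemma lap0_max (h : T -> R) x : (forall y, h y <= h x) -> lap0 adj h x <= 0.
Proof.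
move=> Hm; rewrite /lap0 /lap; apply: mulr_ge0_le0; first by rewrite invr_ge0 ler0n.
by apply: sumr_le0 => y _; rewrite mul1r subr_le0.
Qed.

Lemma MP (K lam beta : R) N g x : eigenfun adj sgn lam g -> CD adj sgn K N ->
  (forall y, Gam adj sgn g g y + beta * (g y * g y) <= Gam adj sgn g g x + beta * (g x * g x)) ->
  0 <= (lam - beta - K) * Gam adj sgn g g x + (beta * lam - invN N * lam ^+ 2) * (g x * g x).
Proof.
move=> He HCD Hm.
have C := HCD g x; rewrite /Gam2 (lap_eig He) /= !Gam_lin2 /lap0 in C.
have L := lap0_max Hm; rewrite /lap0 lapD lapZ in L.
have Gd : Gam adj sgn g g x = 2^-1 * (lap adj (fun _ _ => 1) (fun z => g z * g z) x
   - g x * lap adj sgn g x - g x * lap adj sgn g x) by [].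
rewrite (lap_eig He) in Gd.
set A := lap _ _ (Gam _ _ _ _) x in C L.
set B := lap _ _ (fun z => g z * g z) x in L Gd.
set G := Gam _ _ _ _ x in C L Gd *.
have HB : B = 2 * G - 2 * lam * (g x * g x) by rewrite Gd; field.
rewrite HB in L.
nra.
Qed.


Definition walk (w : nat -> T) n := forall i, (i < n)%N -> adj (w i) (w i.+1).
Definition wsign (w : nat -> T) n : R := \prod_(0 <= i < n) sgn (w i) (w i.+1).
Definition nb (w : nat -> T) n := forall k, (0 < k)%N -> (k < n)%N -> w k.-1 <> w k.+1.

Lemma wsignS w n : wsign w n.+1 = wsign w n * sgn (w n) (w n.+1).
Proof. by rewrite /wsign big_nat_recr. Qed.

Lemma wsign0 w : wsign w 0 = 1.
Proof. by rewrite /wsign big_geq. Qed.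

Lemma walkS w n : walk w n.+1 -> walk w n.
Proof. by move=> H i hi; apply: H; rewrite ltnS ltnW. Qed.

Lemma wsign_sq w n : walk w n -> wsign w n ^+ 2 = 1.
Proof.
elim: n => [|n IH] Hw; first by rewrite wsign0 expr1n.
rewrite wsignS exprMn (IH (walkS Hw)) mul1r; apply: sgn2; exact: Hw.
Qed.

Lemma shorten_walk w n k : walk w n -> (k.+1 < n)%N -> w k = w k.+2 ->
  let w' := fun i => if (i <= k)%N then w i else w i.+2 in
  [/\ walk w' n.-2, w' 0%N = w 0%N, w' n.-2 = w n & wsign w' n.-2 = wsign w n].
Proof.
move=> Hw kn e w'; split.
- move=> i hi; rewrite /w'; case: (leqP i k) => h1; case: (leqP i.+1 k) => h2.
  + by apply: Hw; lia.
  + have -> : i = k by lia.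
    by rewrite e; apply: Hw; lia.
  + lia.
  + by apply: Hw; lia.
- by rewrite /w' leq0n.
- rewrite /w'; case: (leqP n.-2 k) => h.
  + have -> : n.-2 = k by lia.
    by rewrite e; congr w; lia.
  + by congr w; lia.
- rewrite /wsign (big_cat_nat (n := k)) //=; last by lia.
  rewrite [in RHS](big_cat_nat (n := k)) //=; last by lia.
  rewrite [in RHS](big_cat_nat (n := k.+2) (p := n)) //=; last by lia.
  have -> : \prod_(k <= i < k.+2) sgn (w i) (w i.+1) = 1.
    rewrite big_ltn // big_ltn // big_geq // mulr1 -e.
    rewrite -(sgn_sym (Hw k _)); last by lia.
    by rewrite -expr2 sgn2 //; apply: Hw; lia.
  rewrite mul1r; congr (_ * _).
    by apply: eq_big_nat => i hi; rewrite /w' !ifT //; lia.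
  rewrite -{1}[k.+2]addn2 big_addn subn2.
  apply: eq_big_nat => i hi; rewrite /w'; case: (leqP i k) => h1.
    have -> : i = k by lia.
    by rewrite ifF ?e ?addn2 //; lia.
  by rewrite ifF ?addn2 //; lia.
Qed.

Lemma nb_reduce (P : T -> R -> Prop) n w : walk w n -> P (w n) (wsign w n) ->
  exists w' n', [/\ (n' <= n)%N, walk w' n', w' 0%N = w 0%N, P (w' n') (wsign w' n') & nb w' n'].
Proof.
elim/ltn_ind: n w => n IH w Hw HP.
case: (classic (nb w n)) => Hnb; first by exists w, n; split.
have [k [k0 kn e]] : exists k, [/\ (0 < k)%N, (k < n)%N & w k.-1 = w k.+1].
  apply: NNPP => H; apply: Hnb => k k0 kn e; apply: H; by exists k; split.
case: k k0 kn e => [//|k] _ kn /= e.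
have [Hw' H0 Hn Hs] := shorten_walk Hw kn e.
have [w2 [n2 [h1 h2 h3 h4 h5]]] := IH n.-2 ltac:(lia) _ Hw' ltac:(by rewrite /= Hn Hs).
exists w2, n2; split => //; first by lia.
Qed.


Lemma cs_step (A B a m : R) : 0 <= m -> 0 <= B -> A ^+ 2 <= m * B ->
  (A + a) ^+ 2 <= (m + 1) * (B + a ^+ 2).
Proof.
move=> m0 B0 H.
have [m00|mp] := eqVneq m 0.
  rewrite m00 mul0r in H; rewrite m00.
  have A0 : A = 0 by apply/eqP; rewrite -sqrf_eq0 eq_le sqr_ge0 andbT.
  by rewrite A0 add0r add0r mul1r lerDr.
have mpos : 0 < m by rewrite lt_neqAle eq_sym mp m0.
have h : 0 <= (A - m * a) ^+ 2 by apply: sqr_ge0.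
rewrite -subr_ge0 -(pmulr_rge0 _ mpos).
have -> : m * ((m + 1) * (B + a ^+ 2) - (A + a) ^+ 2) =
   (A - m * a) ^+ 2 + (m + 1) * (m * B - A ^+ 2) by ring.
by apply: addr_ge0 => //; apply: mulr_ge0; [lra | rewrite subr_ge0].
Qed.

Lemma CS (a : nat -> R) m :
  (\sum_(0 <= k < m) a k) ^+ 2 <= m%:R * \sum_(0 <= k < m) a k ^+ 2.
Proof.
elim: m => [|m IH]; first by rewrite big_geq // expr0n /= mul0r.
rewrite !big_nat_recr //= -natr1; apply: cs_step => //.
by apply: sumr_ge0 => k _; apply: sqr_ge0.
Qed.

Lemma walk_le w n k : walk w n -> (k <= n)%N -> walk w k.
Proof. by move=> H kn i ik; apply: H; lia. Qed.

Lemma sq_swap (g : T -> R) a b : adj a b ->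
  (sgn a b * g b - g a) ^+ 2 = (sgn b a * g a - g b) ^+ 2.
Proof.
move=> H; rewrite -(sgn_sym H); have h := sgn2 H; move: h.
set s := sgn a b => h.
apply/eqP; rewrite -subr_eq0.
have -> : (s * g b - g a) ^+ 2 - (s * g a - g b) ^+ 2 = (s ^+ 2 - 1) * (g b ^+ 2 - g a ^+ 2) by ring.
by rewrite h subrr mul0r.
Qed.

Lemma pair_sum (b : nat -> R) u :
  \sum_(0 <= k < 2 * u) b k = \sum_(0 <= j < u) (b (2 * j)%N + b (2 * j).+1).
Proof.
elim: u => [|u IH]; first by rewrite !big_geq.
have -> : (2 * u.+1 = (2 * u).+2)%N by lia.
by rewrite !big_nat_recr //= IH addrA.
Qed.


Definition ed (g : T -> R) w k := sgn (w k) (w k.+1) * g (w k.+1) - g (w k).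

Lemma deg_le y : ((deg adj y)%:R <= (maxdeg adj)%:R :> R).
Proof. rewrite ler_nat; exact: (leq_bigmax y). Qed.

Lemma term_bound (g : T -> R) w n M j : walk w n -> nb w n ->
  (forall y, Gam adj sgn g g y <= M) -> ((2 * j).+1 <= n)%N ->
  ed g w (2 * j) ^+ 2 + (if ((2 * j).+1 < n)%N then ed g w (2 * j).+1 ^+ 2 else 0)
   <= 2 * (maxdeg adj)%:R * M.
Proof.
move=> Hw Hnb HM hj.
set k := (2 * j).+1.
set y := w k; set z1 := w (2 * j)%N.
have a1 : adj y z1 by rewrite Hsym; apply: Hw; rewrite /k; lia.
have e1 : ed g w (2 * j) ^+ 2 = (sgn y z1 * g z1 - g y) ^+ 2.
  by rewrite /ed sq_swap // Hsym.
set S := \sum_(z | adj y z) (sgn y z * g z - g y) ^+ 2.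
have dpos : (0 < deg adj y)%N by apply/card_gt0P; exists z1; rewrite inE.
have SG : S = 2 * (deg adj y)%:R * Gam adj sgn g g y.
  rewrite GamE -/S; field; by rewrite pnatr_eq0 -lt0n.
have HS : ed g w (2 * j) ^+ 2 + (if (k < n)%N then ed g w k ^+ 2 else 0) <= S.
  rewrite e1 /S (bigD1 z1) //=; apply: lerD => //.
  case: ifP => hk; last by apply: sumr_ge0 => z _; apply: sqr_ge0.
  rewrite (bigD1 (w k.+1)) /=; last first.
    rewrite (Hw k hk) andTb; apply/eqP => E.
    by apply: (Hnb k) => //; rewrite /z1 in E.
  rewrite /ed -/y ler_wpDr //; by apply: sumr_ge0 => z _; apply: sqr_ge0.
apply: (le_trans HS); rewrite SG -mulrA -mulrA ler_pM2l // .
have G0 := Gam_ge0 g y; have M0 : 0 <= M by apply: le_trans G0 (HM y).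
apply: le_trans (ler_wpM2r G0 (deg_le y)) _.
by apply: ler_wpM2l; [apply: ler0n | apply: HM].
Qed.

Lemma walk_bound (g : T -> R) w n M : walk w n -> nb w n ->
  g (w 0%N) * (wsign w n * g (w n)) <= 0 -> (forall y, Gam adj sgn g g y <= M) ->
  g (w 0%N) ^+ 2 <= 2 * (maxdeg adj * n * uphalf n)%N%:R * M.
Proof.
move=> Hw Hnb Hc HM.
have tel : forall m, wsign w m * g (w m) - g (w 0%N) = \sum_(0 <= k < m) wsign w k * ed g w k.
  elim => [|m IH]; first by rewrite wsign0 mul1r subrr big_geq.
  by rewrite big_nat_recr //= -IH wsignS /ed; ring.
have H1 : g (w 0%N) ^+ 2 <= (wsign w n * g (w n) - g (w 0%N)) ^+ 2 by nra.
rewrite tel in H1.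
have H2 := CS (fun k => wsign w k * ed g w k) n.
have H3 : \sum_(0 <= k < n) (wsign w k * ed g w k) ^+ 2 = \sum_(0 <= k < n) ed g w k ^+ 2.
  apply: eq_big_nat => k hk; rewrite exprMn wsign_sq ?mul1r //; apply: (walk_le Hw); lia.
set u := uphalf n.
have [Hu1 Hu2] : (n <= 2 * u)%N /\ (2 * u <= n.+1)%N.
  have h := odd_double_half n.+1; rewrite -uphalfE -mul2n -/u in h.
  have : (odd n.+1 <= 1)%N by case: odd.
  lia.
set b := fun k => if (k < n)%N then ed g w k ^+ 2 else 0.
have H4 : \sum_(0 <= k < n) ed g w k ^+ 2 = \sum_(0 <= k < 2 * u) b k.
  rewrite (big_cat_nat (n := n) (p := (2 * u)%N)) //=.
  have -> : \sum_(n <= k < 2 * u) b k = 0.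
    rewrite big_nat_cond big1 // => k /andP[/andP[h1 h2] _].
    by rewrite /b ifF //; apply/negbTE; rewrite -leqNgt.
  by rewrite addr0; apply: eq_big_nat => k /andP[_ hk]; rewrite /b hk.
have H5 : \sum_(0 <= j < u) (b (2 * j)%N + b (2 * j).+1) <=
          \sum_(0 <= j < u) (2 * (maxdeg adj)%:R * M).
  apply: ler_sum_nat => j /andP[_ hj].
  rewrite /b ifT; last by lia.
  by apply: term_bound => //; lia.
apply: (le_trans H1); apply: (le_trans H2); rewrite H3 H4 pair_sum.
apply: le_trans (ler_wpM2l (ler0n _ _) H5) _.
rewrite sumr_const_nat subn0 !natrM -[_ *+ u]mulr_natr.
rewrite [X in X <= _](_ : _ = 2 * ((maxdeg adj)%:R * n%:R * u%:R) * M) //; ring.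
Qed.


Lemma argmax (F : T -> R) (x0 : T) : exists x, forall y, F y <= F x.
Proof.
have := @arg_maxP _ _ T x0 predT F erefl.
case=> x _ H; exists x => y; exact: H.
Qed.


Lemma lam_ge0 (lam : R) g x0 : eigenfun adj sgn lam g ->
  (forall y, g y ^+ 2 <= g x0 ^+ 2) -> 0 <= lam * g x0 ^+ 2.
Proof.
move=> He Hm.
have -> : lam * g x0 ^+ 2 = g x0 * (- lap adj sgn g x0) by rewrite He; ring.
rewrite /lap mulrN mulrCA mulr_sumr -mulrN -sumrN.
apply: mulr_ge0; first by rewrite invr_ge0 ler0n.
apply: sumr_ge0 => y /Hsg [_ hs]; have := Hm y.
by case: hs => ->; nra.
Qed.

Lemma invN_facts (eps : R) (N : option R) : 0 < eps ->
  (if N is Some n then 0 < n /\ 4 / (2 + eps) ^+ 2 < n else True) ->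
  0 <= invN N /\ 0 < (2 + eps) ^+ 2 - 4 * invN N.
Proof.
move=> e0; case: N => [n [n0 hn]|_] /=; last first.
  by split => //; rewrite mulr0 subr0; apply: exprn_gt0; lra.
have h2 : 0 < (2 + eps) ^+ 2 by apply: exprn_gt0; lra.
split; first by rewrite invr_ge0 ltW.
rewrite subr_gt0 -ltr_pdivlMr ?invr_gt0 // invrK.
by rewrite mulrC -(ltr_pdivrMr _ _ h2).
Qed.


Lemma core (eps K lam : R) (N : option R) g (Lmax : nat) x0 :
  0 < eps -> (if N is Some n then 0 < n /\ 4 / (2 + eps) ^+ 2 < n else True) ->
  CD adj sgn K N -> eigenfun adj sgn lam g -> lam != 0 ->
  (forall y, g y ^+ 2 <= g x0 ^+ 2) -> g x0 != 0 ->
  (exists w n, [/\ walk w n, w 0%N = x0, (n <= Lmax)%N & g x0 * (wsign w n * g (w n)) <= 0]) ->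
  bound adj eps K N Lmax (uphalf Lmax) <= lam.
Proof.
move=> e0 hN HCD He l0 Hx0 gx0 [w [n [Hw H0 HL Hc]]].
have [w' [n' [h1 h2 h3 h4 h5]]] :=
  nb_reduce (P := fun y S => g x0 * (S * g y) <= 0) Hw Hc.
rewrite H0 in h3.
have [ys Hys] := argmax (Gam adj sgn g g) x0.
set M := Gam adj sgn g g ys in Hys.
have WB := walk_bound h2 h5 ltac:(by rewrite h3; exact: h4) Hys.
rewrite h3 in WB.
set P := (maxdeg adj * n' * uphalf n')%N in WB.
have [q0 c0] := invN_facts e0 hN.
set q := invN N in q0 c0 *.
have g2 : 0 < g x0 ^+ 2 by rewrite exprn_even_gt0.
have M0 : 0 <= M by apply: Gam_ge0.
have P0 : 0 <= P%:R :> R by apply: ler0n.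
have Mp : 0 < M by nra.
have Pp : 0 < P%:R :> R by nra.
have lp : 0 < lam.
  have := lam_ge0 He Hx0; rewrite lt_neqAle eq_sym l0 /= => h.
  by rewrite -(pmulr_lge0 _ g2).
have Kl : K <= lam.
  have := MP (beta := 0) (x := ys) He HCD ltac:(by move=> y; rewrite !mul0r !addr0 Hys).
  rewrite subr0 mul0r sub0r; set gy := g ys * g ys => H.
  have gy0 : 0 <= gy by rewrite /gy -expr2 sqr_ge0.
  have : 0 <= q * lam ^+ 2 * gy by rewrite mulr_ge0 // mulr_ge0 // sqr_ge0.
  rewrite -/M -/q mulNr in H => hh; have : 0 <= (lam - K) * M by lra.
  by rewrite pmulr_lge0 // subr_ge0.
set s := 1 + eps / 2.
set beta := s * lam - K.
have b0 : 0 <= beta by rewrite /beta /s; nra.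
have [x Hx] := argmax (fun y => Gam adj sgn g g y + beta * (g y * g y)) x0.
have := MP He HCD Hx.
set Gx := Gam adj sgn g g x; set gx := g x * g x => HMP.
have gxnn : 0 <= gx by rewrite /gx -expr2 sqr_ge0.
have gxl : gx <= g x0 ^+ 2 by rewrite /gx -expr2.
have HMx : M <= Gx + beta * gx.
  have := Hx ys; rewrite -/M -/Gx -/gx; have : 0 <= beta * (g ys * g ys) by rewrite mulr_ge0 // -expr2 sqr_ge0.
  lra.
have A1 : (eps / 2) * Gx <= (beta - q * lam) * gx.
  have : lam * ((eps / 2) * Gx) <= lam * ((beta - q * lam) * gx).
    by move: HMP; rewrite -/q /beta /s; nra.
  by rewrite ler_pM2l.
have A2 : (eps / 2) * M <= (s * beta - q * lam) * gx.
  by move: A1 HMx; rewrite /s; nra.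
have A3 : 0 < s * beta - q * lam.
  have : 0 < (s * beta - q * lam) * gx by apply: lt_le_trans A2; nra.
  by move=> h; nra.
have A4 : (eps / 2) * M <= (s * beta - q * lam) * g x0 ^+ 2.
  by apply: (le_trans A2); rewrite ler_pM2l.
have A5 : eps <= P%:R * ((2 + eps) ^+ 2 * lam - 2 * (2 + eps) * K - 4 * q * lam).
  have : (eps / 2) * g x0 ^+ 2 <= (2 * P%:R * (s * beta - q * lam)) * g x0 ^+ 2.
    by move: A4 WB; nra.
  rewrite ler_pM2r // /beta /s => h; nra.
set X := (2 + eps) ^+ 2 * lam - 2 * (2 + eps) * K - 4 * q * lam in A5.
have X0 : 0 < X by nra.
set P' := (maxdeg adj * Lmax * uphalf Lmax)%N.
have PP : (P <= P')%N.
  have hn : (n' <= Lmax)%N by apply: leq_trans h1 HL.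
  rewrite /P /P'; apply: leq_mul; first by apply: leq_mul; [exact: leqnn | exact: hn].
  by rewrite !uphalfE; apply: half_leq; rewrite ltnS; exact: hn.
have PP' : P%:R <= P'%:R :> R by rewrite ler_nat.
have P'p : 0 < P'%:R :> R by apply: lt_le_trans PP'.
have A6 : eps / P'%:R <= X.
  rewrite ler_pdivrMr //.
  have : 0 <= (P'%:R - P%:R) * X by apply: mulr_ge0; [rewrite subr_ge0 | apply: ltW].
  move: A5; lra.
rewrite /bound -/q.
have -> : eps / ((2 + eps) ^+ 2 - 4 * q) * (P'%:R)^-1 + 2 * (2 + eps) / ((2 + eps) ^+ 2 - 4 * q) * K
   = (eps / P'%:R + 2 * (2 + eps) * K) / ((2 + eps) ^+ 2 - 4 * q).
  by field; apply/andP; split; rewrite gt_eqF.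
rewrite ler_pdivrMr //; move: A6; rewrite /X; lra.
Qed.


Lemma next_mk (w : nat -> T) n : uniq (mkseq w n) -> w n = w 0%N -> forall i, (i < n)%N ->
  next (mkseq w n) (w i) = w i.+1.
Proof.
case: n => [//|n] Hu Hc i hi.
have mem : w i \in mkseq w n.+1 by rewrite -(nth_mkseq (w 0%N) w hi) mem_nth // size_mkseq.
rewrite next_nth mem.
have -> : mkseq w n.+1 = w 0%N :: map w (iota 1 n) by [].
have hidx : index (w i) (mkseq w n.+1) = i.
  by rewrite -{1}(nth_mkseq (w 0%N) w hi) index_uniq // size_mkseq.
rewrite hidx.
case: (ltnP i n) => h.
  by rewrite (nth_map 0%N) ?size_iota // nth_iota.
have -> : i = n by lia.
by rewrite nth_default ?size_map ?size_iota // Hc.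
Qed.

Lemma closed_sign : balanced adj sgn -> forall n w, walk w n -> w n = w 0%N -> wsign w n = 1.
Proof.
move=> Hbal; elim/ltn_ind => n IH w Hw Hc.
case: (classic (exists i j, [/\ (i < j)%N, (j < n)%N & w i = w j])).
  move=> [i [j [hij hjn e]]].
  set w1 := fun k => w (i + k)%N.
  have Hw1 : walk w1 (j - i) by move=> k hk; rewrite /w1 addnS; apply: Hw; lia.
  have Hc1 : w1 (j - i)%N = w1 0%N by rewrite /w1 addn0 subnKC ?e // ltnW.
  set w2 := fun k => if (k <= i)%N then w k else w (k + (j - i))%N.
  have Hw2 : walk w2 (n - (j - i)).
    move=> k hk; rewrite /w2; case: (leqP k i) => h1; case: (leqP k.+1 i) => h2.
    - by apply: Hw; lia.
    - have -> : k = i by lia.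
      rewrite e; have -> : (i.+1 + (j - i) = j.+1)%N by lia.
      by apply: Hw.
    - lia.
    - by rewrite addSn; apply: Hw; lia.
  have Hc2 : w2 (n - (j - i))%N = w2 0%N.
    by rewrite /w2 ifF; [rewrite subnK ?Hc //; lia | apply/negbTE; rewrite -ltnNge; lia].
  have S1 := IH (j - i)%N ltac:(lia) w1 Hw1 Hc1.
  have S2 := IH (n - (j - i))%N ltac:(lia) w2 Hw2 Hc2.
  move: S1 S2; rewrite /wsign.
  rewrite (big_cat_nat (n := i) (m := 0) (p := (n - (j - i))%N)) /=; [|lia|lia].
  have -> : \prod_(0 <= k < i) sgn (w2 k) (w2 k.+1) = \prod_(0 <= k < i) sgn (w k) (w k.+1).
    by apply: eq_big_nat => k hk; rewrite /w2 !ifT //; lia.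
  have -> : \prod_(i <= k < n - (j - i)) sgn (w2 k) (w2 k.+1) = \prod_(j <= k < n) sgn (w k) (w k.+1).
    rewrite -[in RHS](subnKC (ltnW hij)) big_addn.
    apply: eq_big_nat => k hk; rewrite /w2.
    case: (leqP k i) => h.
      have -> : k = i by lia.
      rewrite ifF; last by apply/negbTE; rewrite -ltnNge.
      by rewrite e; congr (sgn (w _) _); lia.
    by rewrite ifF; [congr (sgn (w _) (w _)); lia | apply/negbTE; rewrite -ltnNge; lia].
  have -> : \prod_(0 <= k < j - i) sgn (w1 k) (w1 k.+1) = \prod_(i <= k < j) sgn (w k) (w k.+1).
    rewrite -{2}[i]add0n big_addn; apply: eq_big_nat => k hk.
    by rewrite /w1 addnS addnC.
  move=> S1 S2.
  rewrite (big_cat_nat (n := i) (m := 0) (p := n)) /=; [|lia|lia].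
  rewrite (big_cat_nat (n := j) (m := i) (p := n)) /=; [|lia|lia].
  by rewrite S1 mul1r S2.
move=> Hnr.
have inj : forall i j, (i < n)%N -> (j < n)%N -> w i = w j -> i = j.
  move=> i j hi hj e; case: (ltngtP i j) => // h.
  - by exfalso; apply: Hnr; exists i, j.
  - by exfalso; apply: Hnr; exists j, i.
case: n IH Hw Hc Hnr inj => [|[|[|n]]] IH Hw Hc Hnr inj.
- by rewrite wsign0.
- by have := Hw 0%N erefl; rewrite Hc Hirr.
- rewrite /wsign big_nat_recr //= big_nat1 Hc sgn_sym ?(Hw 0%N) // -expr2 sgn2 //.
  by rewrite -{1}Hc; apply: (Hw 1%N).
set m := n.+3.
have Hum : uniq (mkseq w m).
  apply/mkseq_uniqP => i j hi hj; exact: inj.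
have Hcy : cycle adj (mkseq w m).
  apply: (cycle_from_next Hum) => x /mapP [i]; rewrite mem_iota add0n => /andP[_ hi] ->.
  by rewrite next_mk //; apply: Hw.
have := Hbal (mkseq w m) (introT andP (conj Hcy Hum)) ltac:(by rewrite size_mkseq).
rewrite /mkseq big_map => <-.
rewrite /wsign /index_iota subn0; apply: eq_big_seq => i; rewrite mem_iota add0n => /andP[_ hi].
by rewrite -/(mkseq w m) next_mk.
Qed.


Definition wf (x : T) (p : seq T) := fun i => nth x (x :: p) i.

Lemma wf_walk x p : path adj x p -> walk (wf x p) (size p).
Proof. by move=> /(pathP x) H i hi; exact: H i hi. Qed.

Lemma wf_last x p : wf x p (size p) = last x p.
Proof. by rewrite /wf -[size p]/((size (x :: p)).-1) nth_last. Qed.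

Lemma dist_path (conn : connected_graph adj) x y :
  exists p : seq T, path adj x p && (last x p == y) && (size p <= diam adj)%N.
Proof.
have := conn x y => /connectP [p Hp ->].
case: (shortenP Hp) => p' Hp' Hu _.
have Hs : (size p' < #|T|)%N.
  have := max_card (mem (x :: p')); by rewrite (card_uniqP Hu).
set z := last x p'.
have Hr : reach_in adj x z (size p').
  by apply/existsP; exists (in_tuple p'); rewrite /= Hp' eqxx.
have Hhas : has (reach_in adj x z) (iota 0 #|T|).
  by apply/hasP; exists (size p'); rewrite ?mem_iota.
have Hn0 : (dist adj x z < #|T|)%N.
  by move: Hhas; rewrite has_find size_iota.
have := nth_find 0%N Hhas; rewrite nth_iota // add0n => /existsP [t /andP [tp tl]].
exists t; rewrite tp tl size_tuple /=.
apply: (leq_trans _ (leq_bigmax x)); exact: (leq_bigmax z).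
Qed.

Lemma deg_lap g x : (deg adj x)%:R * lap adj sgn g x = \sum_(y | adj x y) (sgn x y * g y - g x).
Proof.
rewrite /lap mulrA; case: (eqVneq (deg adj x) 0%N) => h.
  have E : [set y | adj x y] = set0 by apply: cards0_eq.
  rewrite big_pred0 ?mulr0 // => y; apply/negbTE/negP => hy.
  have : y \in [set y | adj x y] by rewrite inE.
  by rewrite E inE.
by rewrite mulfV ?mul1r // pnatr_eq0.
Qed.

Lemma ortho tau lam g : (forall u v, adj u v -> sgn u v = tau u * tau v) ->
  (forall y, tau y ^+ 2 = 1) -> eigenfun adj sgn lam g ->
  lam * \sum_x (deg adj x)%:R * (tau x * g x) = 0.
Proof.
move=> Hc Ht He.
set G := fun y => tau y * g y.
have E : forall x, lam * ((deg adj x)%:R * (tau x * g x)) =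
    - \sum_(y | adj x y) (G y - G x).
  move=> x.
  have -> : lam * ((deg adj x)%:R * (tau x * g x)) = - (tau x * ((deg adj x)%:R * lap adj sgn g x)).
    by transitivity ((deg adj x)%:R * tau x * (lam * g x)); [ring | rewrite -(He x); ring].
  rewrite deg_lap mulr_sumr; congr (- _); apply: eq_bigr => y hy.
  rewrite /G (Hc _ _ hy) mulrBr mulrA mulrA -expr2 Ht mul1r; ring.
rewrite mulr_sumr (eq_bigr _ (fun x _ => E x)) sumrN.
apply/eqP; rewrite oppr_eq0; apply/eqP.
have -> : \sum_x \sum_(y | adj x y) (G y - G x) =
   \sum_x \sum_(y | adj x y) G y - \sum_x \sum_(y | adj x y) G x.
  by rewrite -sumrB; apply: eq_bigr => x _; rewrite sumrB.
apply/eqP; rewrite subr_eq0; apply/eqP.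
rewrite (exchange_big_dep predT) //=; apply: eq_bigr => y _.
by apply: eq_bigl => x; rewrite Hsym.
Qed.


Definition realized (x0 : T) (tau : T -> R) := forall y, exists w n,
  [/\ walk w n, w 0%N = x0, w n = y, (n <= diam adj)%N & wsign w n = tau y].

Lemma tau_sq x0 tau : realized x0 tau -> forall y, tau y ^+ 2 = 1.
Proof. by move=> H y; have [w [n [Hw _ _ _ <-]]] := H y; apply: wsign_sq. Qed.

Lemma bal_cons x0 tau : balanced adj sgn -> realized x0 tau ->
  forall u v, adj u v -> sgn u v = tau u * tau v.
Proof.
move=> Hb Hr u v huv.
have [wu [nu [Hwu Hu0 Hun _ Hus]]] := Hr u.
have [wv [nv [Hwv Hv0 Hvn _ Hvs]]] := Hr v.
set w := fun i => if (i <= nu)%N then wu i else wv (nu.+1 + nv - i)%N.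
have Hw : walk w (nu.+1 + nv).
  move=> i hi; rewrite /w; case: (leqP i nu) => h1; case: (leqP i.+1 nu) => h2.
  - by apply: Hwu; lia.
  - have -> : i = nu by lia.
    rewrite Hun; have -> : (nu.+1 + nv - nu.+1 = nv)%N by lia.
    by rewrite Hvn.
  - lia.
  - have -> : (nu.+1 + nv - i = (nu.+1 + nv - i.+1).+1)%N by lia.
    by rewrite Hsym; apply: Hwv; lia.
have Hc : w (nu.+1 + nv)%N = w 0%N.
  by rewrite /w ifF ?subnn ?Hv0 ?Hu0 //; apply/negbTE; rewrite -ltnNge; lia.
have S := closed_sign Hb Hw Hc.
have Hsplit : wsign w (nu.+1 + nv) = tau u * sgn u v * tau v.
  rewrite /wsign (big_cat_nat (n := nu.+1) (m := 0) (p := (nu.+1 + nv)%N)) /=; [|lia|lia].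
  rewrite big_nat_recr //=.
  have -> : \prod_(0 <= i < nu) sgn (w i) (w i.+1) = tau u.
    by rewrite -Hus /wsign; apply: eq_big_nat => i hi; rewrite /w !ifT //; lia.
  have -> : sgn (w nu) (w nu.+1) = sgn u v.
    rewrite /w ifT // ifF; last by apply/negbTE; rewrite -ltnNge.
    rewrite Hun; have -> : (nu.+1 + nv - nu.+1 = nv)%N by lia.
    by rewrite Hvn.
  congr (_ * _).
  rewrite -{1}[nu.+1]add0n big_addn.
  have -> : (nu.+1 + nv - nu.+1 = nv)%N by lia.
  rewrite big_nat_rev /= -Hvs /wsign; apply: eq_big_nat => k hk.
  rewrite /w !ifF; [|apply/negbTE; rewrite -ltnNge; lia|apply/negbTE; rewrite -ltnNge; lia].
  have -> : (nu.+1 + nv - (0 + nv - k.+1 + nu.+1) = k.+1)%N by lia.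
  have -> : (nu.+1 + nv - (0 + nv - k.+1 + nu.+1).+1 = k)%N by lia.
  by rewrite sgn_sym // Hsym; apply: Hwv; lia.
rewrite Hsplit in S.
have tu := tau_sq Hr u; have tv := tau_sq Hr v.
transitivity (sgn u v * tau u ^+ 2 * tau v ^+ 2); first by rewrite tu tv !mulr1.
transitivity ((tau u * sgn u v * tau v) * (tau u * tau v)); first by ring.
by rewrite S mul1r.
Qed.


Section Main.
Variables (eps K lam : R) (N : option R) (f : T -> R) (x0 : T) (tau : T -> R).
Hypotheses (e0 : 0 < eps)
  (hN : if N is Some n then 0 < n /\ 4 / (2 + eps) ^+ 2 < n else True)
  (HCD : CD adj sgn K N) (He : eigenfun adj sgn lam f) (l0 : lam != 0)
  (Hx0 : forall y, f y ^+ 2 <= f x0 ^+ 2) (fx0 : f x0 != 0) (Hr : realized x0 tau).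

Lemma from_y Lmax : (diam adj <= Lmax)%N -> (exists y, f x0 * (tau y * f y) <= 0) ->
  bound adj eps K N Lmax (uphalf Lmax) <= lam.
Proof.
move=> hL [y hy]; apply: (core e0 hN HCD He l0 Hx0 fx0).
have [w [n [Hw H0 Hn Hd Hs]]] := Hr y.
exists w, n; split => //; first by apply: leq_trans Hd hL.
by rewrite Hs Hn.
Qed.

Lemma from_consistent Lmax : (diam adj <= Lmax)%N ->
  (forall u v, adj u v -> sgn u v = tau u * tau v) ->
  bound adj eps K N Lmax (uphalf Lmax) <= lam.
Proof.
move=> hL Hc; apply: (from_y hL).
have O := ortho Hc (tau_sq Hr) He.
have S0 : \sum_x (deg adj x)%:R * (tau x * f x) = 0.
  by move: O => /eqP; rewrite mulf_eq0 (negbTE l0) /= => /eqP.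
apply: NNPP => Hn.
have Hp : forall y, 0 < f x0 * (tau y * f y).
  by move=> y; rewrite ltNge; apply/negP => h; apply: Hn; exists y.
have d0 : (0 < deg adj x0)%N.
  rewrite lt0n; apply/negP => /eqP h.
  have := He x0; rewrite /lap h invr0 mul0r oppr0 => /esym /eqP.
  by rewrite mulf_eq0 (negbTE l0) (negbTE fx0).
have : 0 < f x0 * \sum_x (deg adj x)%:R * (tau x * f x).
  rewrite mulr_sumr (bigD1 x0) //=.
  apply: ltr_pwDl.
    rewrite mulrCA; apply: mulr_gt0; [by rewrite ltr0n | exact: Hp].
  apply: sumr_ge0 => x _; rewrite mulrCA; apply: mulr_ge0; [exact: ler0n | exact: ltW].
by rewrite S0 mulr0 ltxx.
Qed.

Lemma from_inconsistent :
  ~ (forall u v, adj u v -> sgn u v = tau u * tau v) ->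
  bound adj eps K N (diam adj).+1 (uphalf (diam adj).+1) <= lam.
Proof.
move=> Hnc.
have [u [v [huv hs]]] : exists u v, adj u v /\ sgn u v <> tau u * tau v.
  apply: NNPP => H; apply: Hnc => u v huv; apply: NNPP => h; apply: H; by exists u, v.
case: (classic (exists y, f x0 * (tau y * f y) <= 0)) => Hy.
  exact: (from_y (leqnSn _) Hy).
have Hp : forall y, 0 < f x0 * (tau y * f y).
  by move=> y; rewrite ltNge; apply/negP => h; apply: Hy; exists y.
have hs' : sgn u v = - (tau u * tau v).
  have : (tau u * tau v) ^+ 2 = 1 by rewrite exprMn !(tau_sq Hr) mulr1.
  move/eqP; rewrite sqrf_eq1 => /orP [] /eqP E; rewrite E in hs *;
  case: (Hsg huv) => _ [] E2; rewrite E2 in hs *; rewrite ?opprK //; by exfalso; apply: hs.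
have [wu [nu [Hwu Hu0 Hun Hd Hus]]] := Hr u.
set w := fun i => if (i <= nu)%N then wu i else v.
apply: (core e0 hN HCD He l0 Hx0 fx0).
exists w, nu.+1; split.
- move=> i hi; rewrite /w; case: (leqP i.+1 nu) => h.
    by rewrite ifT; [apply: Hwu | apply: ltnW].
  have -> : i = nu by lia.
  by rewrite leqnn Hun.
- by rewrite /w leq0n.
- by [].
- rewrite wsignS.
  have -> : wsign w nu = tau u.
    by rewrite -Hus /wsign; apply: eq_big_nat => i hi; rewrite /w !ifT //; lia.
  rewrite /w leqnn ltnn Hun hs'.
  have := Hp v; have := tau_sq Hr u; nra.
Qed.

End Main.

End Aux.

Theorem theorem3p4 (R : realType) (T : finType) (adj : rel T)
    (sgn : T -> T -> R) (eps K lam : R) (N : option R) :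
  simple_graph adj -> connected_graph adj -> signing adj sgn ->
  0 < eps ->
  (if N is Some n then 0 < n /\ 4 / (2 + eps) ^+ 2 < n else True) ->
  CD adj sgn K N ->
  signed_eigenvalue adj sgn lam -> lam != 0 ->
  bound adj eps K N (diam adj).+1 (uphalf (diam adj).+1) <= lam /\
  (mult_ge2 adj sgn lam \/ balanced adj sgn ->
   bound adj eps K N (diam adj) (uphalf (diam adj)) <= lam).
Proof.
move=> [Hsym Hirr] conn Hsg e0 hN HCD [f [He [xf fxf]]] l0.
have [x0 Hx0] := argmax (fun y => f y ^+ 2) xf.
have Hx0' : forall y, f y ^+ 2 <= f x0 ^+ 2 := Hx0.
have fx0 : f x0 != 0.
  apply/negP => /eqP h; have := Hx0' xf; rewrite h expr0n /= => h2.
  by move: fxf; rewrite -sqrf_eq0 eq_le h2 sqr_ge0.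
pose pk := fun y => xchoose (dist_path conn x0 y).
pose tau := fun y => wsign sgn (wf x0 (pk y)) (size (pk y)).
have Hr : realized adj sgn x0 tau.
  move=> y; have := xchooseP (dist_path conn x0 y); rewrite -/(pk y) => /andP [/andP [hp hl] hs].
  exists (wf x0 (pk y)), (size (pk y)); split => //.
  - exact: wf_walk.
  - by rewrite wf_last (eqP hl).
split.
  case: (classic (forall u v, adj u v -> sgn u v = tau u * tau v)) => Hc.
    exact: (from_consistent Hsym Hsg e0 hN HCD He l0 Hx0' fx0 Hr (leqnSn _) Hc).
  exact: (from_inconsistent Hsym Hsg e0 hN HCD He l0 Hx0' fx0 Hr Hc).
case=> [[f1 [f2 [He1 [He2 Hind]]]] | Hb]; last first.
  exact: (from_consistent Hsym Hsg e0 hN HCD He l0 Hx0' fx0 Hr (leqnn _) (bal_cons Hsym Hirr Hsg Hb Hr)).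
have [z fz] : exists z, f1 z != 0.
  apply: NNPP => H.
  have [] := Hind 1 0.
    move=> x; rewrite mul0r addr0 mul1r; apply/eqP; apply: NNPP => h; apply: H; exists x; exact/negP.
  by move=> /eqP; rewrite oner_eq0.
pose a := f2 z; pose b := - f1 z.
pose g := fun y => a * f1 y + b * f2 y.
have Heg : eigenfun adj sgn lam g.
  move=> x; rewrite /g (lapD adj sgn (fun y => a * f1 y) (fun y => b * f2 y)) !lapZ.
  have E1 : lap adj sgn f1 x = - (lam * f1 x) by rewrite -He1 opprK.
  have E2 : lap adj sgn f2 x = - (lam * f2 x) by rewrite -He2 opprK.
  by rewrite E1 E2; ring.
have [xg gxg] : exists x, g x != 0.
  apply: NNPP => H.
  have [_ hb] := Hind a b (fun x => ltac:(apply/eqP; apply: NNPP => h; apply: H; exists x; exact/negP)).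
  by move: fz; rewrite -oppr_eq0 -/b hb eqxx.
have [x1 Hx1] := argmax (fun y => g y ^+ 2) xg.
have Hx1' : forall y, g y ^+ 2 <= g x1 ^+ 2 := Hx1.
have gx1 : g x1 != 0.
  apply/negP => /eqP h; have := Hx1' xg; rewrite h expr0n /= => h2.
  by move: gxg; rewrite -sqrf_eq0 eq_le h2 sqr_ge0.
apply: (core Hsym Hsg e0 hN HCD Heg l0 Hx1' gx1).
have [p /andP [/andP [hp hl] hs]] := dist_path conn x1 z.
exists (wf x1 p), (size p); split => //; first exact: wf_walk.
rewrite wf_last (eqP hl) /g /a /b.
have -> : f2 z * f1 z + - f1 z * f2 z = 0 by ring.
by rewrite !mulr0.
Qed.
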